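(* In the periodic setting below, let $0<d\le2$ and $t_0\in\mathbb R$. For any $u^0\in l^{\infty,+}$: if $u^0\le d\phi(t_0,\cdot)+d_1\phi_1(t_0,\cdot)$ (resp. $u^0\ge d\phi(t_0,\cdot)-d_1\phi_1(t_0,\cdot)$), then for $d_1/d$ sufficiently large, $u(t;t_0,u^0)\le d\phi(t,\cdot)+d_1\phi_1(t,\cdot)$ (resp. $u(t;t_0,u^0)\ge d\phi(t,\cdot)-d_1\phi_1(t,\cdot)$) for all $t\ge t_0$.
   Context: Periodic setting: equation (E) is $\dot u_j=d(t,j+1)(u_{j+1}-u_j)+d(t,j-1)(u_{j-1}-u_j)+u_jf(t,j,u_j)$, $j\in\mathbb Z$, with $d$ bounded, $\inf d>0$, $d(t+T,j)=d(t,j+J)=d(t,j)$, $f(t+T,j,u)=f(t,j+J,u)=f(t,j,u)$ ($T>0$, $J\in\mathbb Z^+$), and $f$ satisfying (H0): locally Hölder in $t$, Lipschitz in $u$, $C^1$ in $u$ for $u\ge0$, $f(t,j,u)=f(t,j,0)$ for $u\le0$, $f<0$ for $u\ge M_0$, $f_u<0$ for $u\ge0$, $\liminf_{t-s\to\infty}\frac1{t-s}\int_s^t\inf_jf(\tau,j,0)d\tau>0$. $u(t;s,u^0)$ is the solution of (E) with $u(s;s,u^0)=u^0$; $l^{\infty,+}$ is the set of bounded nonnegative sequences; inequalities between sequences are componentwise. For $\mu\in\mathbb R$, $\lambda(\mu)$ and $\psi^\mu(t,j)>0$ ($T$-periodic in $t$, $J$-periodic in $j$, $\|\psi^\mu(0,\cdot)\|_\infty=1$)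 are such that $e^{\lambda(\mu)t}\psi^\mu(t,j)$ solves $\dot v_j=d(t,j-1)(e^\mu v_{j-1}-v_j)+d(t,j+1)(e^{-\mu}v_{j+1}-v_j)+f(t,j,0)v_j$. $\mu^*>0$ minimizes $\lambda(\mu)/\mu$ over $\mu>0$, $c^*=\lambda(\mu^* )/\mu^*$. Fix $c>c^*$ and $0<\mu<\mu'<\min\{2\mu,\mu^*\}$ with $c=\lambda(\mu)/\mu$ and $\lambda(\mu)/\mu>\lambda(\mu')/\mu'>c^*$. Set $\phi(t,j)=e^{-\mu(j-ct)}\psi^\mu(t,j)$ and $\phi_1(t,j)=e^{-\mu'(j-ct)}\psi^{\mu'}(t,j)$. *)

(* Defs.v *)
From Stdlib Require Import Reals Lra Lia ZArith List.
Open Scope R_scope.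

(* minimum of h over the indices 0..J-1 (J >= 1). With J-periodicity in j this is inf_j h j. *)
Definition minj (J : Z) (h : Z -> R) : R :=
  fold_right Rmin (h 0%Z) (map (fun k => h (Z.of_nat k)) (seq 0 (Z.to_nat J))).

Definition rhsE (dd : R -> Z -> R) (f : R -> Z -> R -> R) (t : R) (v : Z -> R) (j : Z) : R :=
  dd t (j + 1)%Z * (v (j + 1)%Z - v j) + dd t (j - 1)%Z * (v (j - 1)%Z - v j)
  + v j * f t j (v j).

Definition rhsLin (dd : R -> Z -> R) (f : R -> Z -> R -> R) (mu t : R) (v : Z -> R) (j : Z) : R :=
  dd t (j - 1)%Z * (exp mu * v (j - 1)%Z - v j) + dd t (j + 1)%Z * (exp (- mu) * v (j + 1)%Z - v j)
  + f t j 0 * v j.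

Definition linf_plus (u0 : Z -> R) : Prop :=
  (forall j, 0 <= u0 j) /\ exists B, forall j, u0 j <= B.

Definition is_solution (dd : R -> Z -> R) (f : R -> Z -> R -> R) (t0 : R) (u0 : Z -> R)
  (u : R -> Z -> R) : Prop :=
  (forall j, u t0 j = u0 j) /\
  (forall t, t0 <= t -> exists B, forall s j, t0 <= s <= t -> Rabs (u s j) <= B) /\
  (forall j eps, 0 < eps -> exists delta, 0 < delta /\
       forall s, t0 <= s < t0 + delta -> Rabs (u s j - u0 j) < eps) /\
  (forall j t, t0 < t -> derivable_pt_lim (fun s => u s j) t (rhsE dd f t (u t) j)).

Definition periodic_setting (T : R) (J : Z) (dd : R -> Z -> R) (f : R -> Z -> R -> R) : Prop :=
  0 < T /\ (0 < J)%Z /\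
  (exists B, forall t j, dd t j <= B) /\
  (exists delta, 0 < delta /\ forall t j, delta <= dd t j) /\
  (forall t j, dd (t + T) j = dd t j) /\
  (forall t j, dd t (j + J)%Z = dd t j) /\
  (forall t j u, f (t + T) j u = f t j u) /\
  (forall t j u, f t (j + J)%Z u = f t j u) /\
  (forall j a b M, exists C alpha, 0 < alpha <= 1 /\
      forall t s u, a <= t <= b -> a <= s <= b -> Rabs u <= M ->
        Rabs (f t j u - f s j u) <= C * Rpower (Rabs (t - s)) alpha) /\
  (forall M, exists L, forall t j u v, Rabs u <= M -> Rabs v <= M ->
        Rabs (f t j u - f t j v) <= L * Rabs (u - v)) /\
  (exists fu : R -> Z -> R -> R,
      (forall t j u, 0 < u -> derivable_pt_lim (f t j) u (fu t j u)) /\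
      (forall t j u, 0 <= u -> forall eps, 0 < eps -> exists delta, 0 < delta /\
          forall v, 0 <= v -> Rabs (v - u) < delta -> Rabs (fu t j v - fu t j u) < eps) /\
      (forall t j u, 0 <= u -> fu t j u < 0)) /\
  (forall t j u, u <= 0 -> f t j u = f t j 0) /\
  (exists M0, 0 < M0 /\ forall t j u, M0 <= u -> f t j u < 0) /\
  (* liminf_{t-s -> oo} 1/(t-s) int_s^t inf_j f(tau,j,0) dtau > 0 *)
  (exists eps L, 0 < eps /\ forall s t, L <= t - s ->
      forall pr : Riemann_integrable (fun tau => minj J (fun j => f tau j 0)) s t,
        eps * (t - s) <= RiemannInt pr).

(* lam, psi give, for every mu, the principal eigen-data:
   e^{lam mu t} psi mu t j solves the linearized mu-equation, psi > 0, periodic,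
   ||psi mu 0 .||_infty = 1. *)
Definition principal_data (T : R) (J : Z) (dd : R -> Z -> R) (f : R -> Z -> R -> R)
  (lam : R -> R) (psi : R -> R -> Z -> R) : Prop :=
  forall mu,
    (forall t j, 0 < psi mu t j) /\
    (forall t j, psi mu (t + T) j = psi mu t j) /\
    (forall t j, psi mu t (j + J)%Z = psi mu t j) /\
    is_lub (fun x => exists j, x = Rabs (psi mu 0 j)) 1 /\
    (forall t j, derivable_pt_lim (fun s => exp (lam mu * s) * psi mu s j) t
        (rhsLin dd f mu t (fun k => exp (lam mu * t) * psi mu t k) j)).

Definition phi_of (lam : R -> R) (psi : R -> R -> Z -> R) (mu c t : R) (j : Z) : R :=
  exp (- mu * (IZR j - c * t)) * psi mu t j.

(* Main.v *)
Require Import Defs.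
From Stdlib Require Import Reals Lra Lia ZArith.
Open Scope R_scope.


Definition Dop (dd : R -> Z -> R) (t : R) (v : Z -> R) (j : Z) : R :=
  dd t (j + 1)%Z * (v (j + 1)%Z - v j) + dd t (j - 1)%Z * (v (j - 1)%Z - v j).

Lemma exp_le' x y : x <= y -> exp x <= exp y.
Proof. intros H; destruct (Rle_lt_or_eq_dec _ _ H) as [H1|H1].
 left; apply exp_increasing; auto. subst; lra. Qed.

Lemma exp_ge1x x : 1 + x <= exp x.
Proof. destruct (Req_dec x 0) as [->|H]. rewrite exp_0; lra.
 left; apply exp_ineq1; auto. Qed.

Lemma Rmax_cont (t0 x : R) : continuity_pt (fun s => Rmax t0 s) x.
Proof.
 unfold continuity_pt, continue_in, limit1_in, limit_in. intros eps Heps.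
 exists eps; split; auto. intros y [_ Hy]. simpl in *. unfold Rdist in *.
 unfold Rmax; destruct (Rle_dec t0 y); destruct (Rle_dec t0 x);
 revert Hy; unfold Rabs; repeat destruct Rcase_abs; lra.
Qed.

Lemma deriv_eq f x l l' : derivable_pt_lim f x l -> l = l' -> derivable_pt_lim f x l'.
Proof. intros H ->; auto. Qed.

Lemma deriv_exp_aff a b x : derivable_pt_lim (fun s => exp (a * s + b)) x (a * exp (a * x + b)).
Proof.
 assert (H1 : derivable_pt_lim (fun s => a * s + b) x a).
 { apply deriv_eq with (a * 1 + 0).
   apply (derivable_pt_lim_plus (fun s => a * s) (fun _ => b)).
   apply (derivable_pt_lim_scal id). apply derivable_pt_lim_id.
   apply derivable_pt_lim_const. ring. }
 apply deriv_eq with (exp (a * x + b) * a).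
 apply (derivable_pt_lim_comp (fun s => a * s + b) exp); auto.
 apply derivable_pt_lim_exp. ring.
Qed.

Lemma deriv_left_min (g : R -> R) (t l a : R) : a < t -> derivable_pt_lim g t l ->
  (forall s, a <= s < t -> g t <= g s) -> l <= 0.
Proof.
 intros Hat Hd Hm. destruct (Rle_lt_dec l 0) as [ok|Hl]; auto. exfalso.
 destruct (Hd (l/2)) as [del Hdel]; [lra|].
 set (h := - Rmin (del/2) ((t-a)/2)).
 assert (Hh1 : 0 < Rmin (del/2) ((t-a)/2)).
 { apply Rmin_pos; pose proof (cond_pos del); lra. }
 assert (Hh2 : Rmin (del/2) ((t-a)/2) <= del/2) by apply Rmin_l.
 assert (Hh3 : Rmin (del/2) ((t-a)/2) <= (t-a)/2) by apply Rmin_r.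
 pose proof (cond_pos del).
 specialize (Hdel h). assert (h <> 0) by (unfold h; lra).
 assert (Rabs h < del) by (unfold h; rewrite Rabs_Ropp, Rabs_right; lra).
 specialize (Hdel H0 H1).
 set (q := (g (t + h) - g t) / h) in *.
 assert (Hq : g (t+h) - g t = q * h) by (unfold q; field; auto).
 assert (q > l/2) by (revert Hdel; unfold Rabs; destruct Rcase_abs; lra).
 assert (g t <= g (t+h)) by (apply Hm; unfold h; lra).
 assert (q * h < 0). { assert (h < 0) by (unfold h; lra). nra. }
 lra.
Qed.

Lemma finite_evt (z : R -> Z -> R) (t0 T1 : R) (Hle: t0 <= T1)
  (Hc : forall j c, t0 <= c <= T1 -> continuity_pt (fun s => z s j) c) :
  forall (n : nat) (a : Z), exists k ts, (a <= k <= a + Z.of_nat n)%Z /\ t0 <= ts <= T1 /\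
    forall j s, (a <= j <= a + Z.of_nat n)%Z -> t0 <= s <= T1 -> z ts k <= z s j.
Proof.
 induction n; intros a.
 - destruct (continuity_ab_min (fun s => z s a) t0 T1 Hle (Hc a)) as [m [Hm1 Hm2]].
   exists a, m. split; [lia|]. split; auto. intros j s Hj Hs.
   assert (j = a) by lia. subst. apply Hm1; auto.
 - destruct (IHn a) as [k [ts [Hk [Hts Hmin]]]].
   set (a' := (a + Z.of_nat (S n))%Z).
   destruct (continuity_ab_min (fun s => z s a') t0 T1 Hle (Hc a')) as [m [Hm1 Hm2]].
   destruct (Rle_dec (z ts k) (z m a')) as [H|H].
   + exists k, ts. split; [lia|]. split; auto. intros j s Hj Hs.
     destruct (Z.eq_dec j a') as [->|Hne].
     * eapply Rle_trans; [exact H|]. apply Hm1; auto.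
     * apply Hmin; auto. unfold a' in Hne. lia.
   + exists a', m. split; [unfold a'; lia|]. split; auto. intros j s Hj Hs.
     destruct (Z.eq_dec j a') as [->|Hne].
     * apply Hm1; auto.
     * eapply Rle_trans; [|apply Hmin; auto; unfold a' in Hne; lia]. lra.
Qed.

Lemma cosh_shift x : exp (x + 1) + exp (- (x + 1)) <= 3 * (exp x + exp (- x))
  /\ exp (x - 1) + exp (- (x - 1)) <= 3 * (exp x + exp (- x)).
Proof.
 pose proof exp_le_3. assert (H1 : 1 <= exp 1) by (pose proof (exp_ge1x 1); lra).
 assert (Hm : exp (-1) <= 1). { rewrite <- exp_0. apply exp_le'. lra. }
 assert (exp (-1) > 0) by apply exp_pos.
 pose proof (exp_pos x). pose proof (exp_pos (-x)).
 replace (x+1) with (x + 1) by ring.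
 rewrite exp_plus. replace (-(x+1)) with (-x + -1) by ring. rewrite exp_plus.
 replace (x - 1) with (x + -1) by ring. rewrite exp_plus.
 replace (-(x + -1)) with (-x + 1) by ring. rewrite exp_plus. split; nra.
Qed.

Lemma core_cmp (dd : R -> Z -> R) (Dmax t0 T1 C : R) (w w' : R -> Z -> R) :
  (forall t j, 0 <= dd t j <= Dmax) -> t0 < T1 -> 0 <= C ->
  (forall j, 0 <= w t0 j) ->
  (forall t j, t0 <= t <= T1 -> - C <= w t j) ->
  (forall j, continuity_pt (fun s => w (Rmax t0 s) j) t0) ->
  (forall j t, t0 < t -> derivable_pt_lim (fun s => w s j) t (w' t j)) ->
  (forall j t, t0 < t <= T1 -> w t j < 0 -> Dop dd t (w t) j <= w' t j) ->
  forall t j, t0 <= t <= T1 -> 0 <= w t j.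
Proof.
 intros Hdd HT HC H0 Hlb Hc0 Hder Hineq ta ja Hta.
 destruct (Rle_lt_dec 0 (w ta ja)) as [ok|neg]; auto. exfalso.
 assert (HD : 0 <= Dmax) by (destruct (Hdd 0 0%Z); lra).
 set (beta := 4 * Dmax + 1).
 set (h := fun s (k : Z) => exp (beta * s) * (exp (IZR k) + exp (- IZR k))).
 assert (hpos : forall s k, 0 < h s k).
 { intros; unfold h. pose proof (exp_pos (beta*s)); pose proof (exp_pos (IZR k));
   pose proof (exp_pos (- IZR k)); nra. }
 set (eps := - w ta ja / (2 * h ta ja)).
 assert (Heps : 0 < eps).
 { unfold eps. specialize (hpos ta ja). apply Rdiv_lt_0_compat; lra. }
 assert (Hepsh : eps * h ta ja = - w ta ja / 2).
 { unfold eps. field. specialize (hpos ta ja). lra. }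
 set (z := fun s k => w s k + eps * h s k).
 assert (Hzta : z ta ja < 0) by (unfold z; lra).
 set (E0 := eps * exp (beta * t0)).
 assert (HE0 : 0 < E0) by (unfold E0; pose proof (exp_pos (beta*t0)); nra).
 set (Nz := up (C / E0)).
 destruct (archimed (C / E0)) as [HN1 _].
 assert (HCE : 0 <= C / E0) by (apply Rmult_le_pos; auto; left; apply Rinv_0_lt_compat; auto).
 assert (HNz : (0 <= Nz)%Z). { apply le_IZR. fold Nz in HN1. lra. }
 assert (Hout : forall s k, t0 <= s <= T1 -> (k < - Nz \/ Nz < k)%Z -> 0 < z s k).
 { intros s k Hs Hk. unfold z. specialize (Hlb s k Hs).
   assert (Hexp : exp (beta * t0) <= exp (beta * s)).
   { apply exp_le'. unfold beta. nra. }
   assert (Hk2 : IZR Nz + 1 <= Rabs (IZR k)).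
   { destruct Hk as [Hk|Hk].
     - rewrite Rabs_left. assert (IZR k <= IZR (- Nz) - 1).
       { rewrite <- minus_IZR. apply IZR_le. lia. } rewrite opp_IZR in H. lra.
       apply IZR_lt. lia.
     - rewrite Rabs_right. assert (IZR Nz + 1 <= IZR k).
       { rewrite <- plus_IZR. apply IZR_le. lia. } lra.
       apply Rle_ge, IZR_le. lia. }
   assert (Hc : 1 + Rabs (IZR k) <= exp (IZR k) + exp (- IZR k)).
   { pose proof (exp_ge1x (IZR k)). pose proof (exp_ge1x (- IZR k)).
     pose proof (exp_pos (IZR k)). pose proof (exp_pos (- IZR k)).
     unfold Rabs; destruct Rcase_abs; lra. }
   assert (C < E0 * (1 + Rabs (IZR k))).
   { assert (C = E0 * (C / E0)) by (field; lra). fold Nz in HN1. nra. }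
   unfold h. unfold E0 in *. pose proof (exp_pos (beta * t0)).
   assert (exp (beta*t0) * (1 + Rabs (IZR k)) <= exp (beta * s) * (exp (IZR k) + exp (- IZR k))).
   { apply Rmult_le_compat; try lra. pose proof (Rabs_pos (IZR k)); lra. }
   nra. }
 set (g := fun s k => z (Rmax t0 s) k).
 assert (Hcont : forall k c, t0 <= c <= T1 -> continuity_pt (fun s => g s k) c).
 { intros k c Hcr. unfold g, z.
   assert (Hh : continuity_pt (fun s => eps * h (Rmax t0 s) k) c).
   { apply (continuity_pt_comp (fun s => Rmax t0 s) (fun r => eps * h r k)).
     apply Rmax_cont. apply derivable_continuous_pt.
     exists (eps * (beta * exp (beta * Rmax t0 c + 0) * (exp (IZR k) + exp (- IZR k)))).
     eapply derivable_pt_lim_ext.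
     2:{ apply (derivable_pt_lim_scal (fun r => exp (beta * r + 0) * (exp (IZR k) + exp (- IZR k)))).
         apply deriv_eq with (beta * exp (beta * Rmax t0 c + 0) * (exp (IZR k) + exp (- IZR k)) + exp (beta * Rmax t0 c + 0) * 0).
         apply (derivable_pt_lim_mult (fun r => exp (beta * r + 0)) (fun _ => exp (IZR k) + exp (- IZR k))).
         apply deriv_exp_aff. apply derivable_pt_lim_const. ring. }
     intros r; unfold mult_real_fct, h. rewrite Rplus_0_r. reflexivity. }
   assert (Hw : continuity_pt (fun s => w (Rmax t0 s) k) c).
   { destruct (Rle_lt_or_eq_dec _ _ (proj1 Hcr)) as [Hlt|Heq].
     - apply (continuity_pt_comp (fun s => Rmax t0 s) (fun r => w r k)).
       apply Rmax_cont. rewrite Rmax_right by lra.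
       apply derivable_continuous_pt. exists (w' c k). apply Hder; auto.
     - subst c. apply Hc0. }
   apply (continuity_pt_plus _ _ _ Hw Hh). }
 assert (H2N : (- Nz + Z.of_nat (Z.to_nat (2 * Nz)) = Nz)%Z).
 { rewrite Z2Nat.id; lia. }
 destruct (finite_evt g t0 T1 (Rlt_le _ _ HT) Hcont (Z.to_nat (2*Nz)) (- Nz)%Z)
   as [k [ts [Hk [Hts Hmin]]]].
 rewrite H2N in Hk, Hmin.
 assert (Hgz : forall s j, t0 <= s -> g s j = z s j).
 { intros; unfold g; rewrite Rmax_right; auto. }
 assert (Hja : (- Nz <= ja <= Nz)%Z).
 { destruct (Z_le_gt_dec (- Nz) ja); destruct (Z_le_gt_dec ja Nz); try lia;
   exfalso; assert (0 < z ta ja) by (apply Hout; auto; lia); lra. }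
 assert (Hzk : z ts k <= z ta ja).
 { rewrite <- (Hgz ts k), <- (Hgz ta ja) by lra. apply Hmin; auto. }
 assert (Hglob : forall s j, t0 <= s <= T1 -> z ts k <= z s j).
 { intros s j Hs. destruct (Z_le_gt_dec (- Nz) j); destruct (Z_le_gt_dec j Nz).
   - rewrite <- (Hgz ts k), <- (Hgz s j) by lra. apply Hmin; auto; lia.
   - assert (0 < z s j) by (apply Hout; auto; lia); lra.
   - assert (0 < z s j) by (apply Hout; auto; lia); lra.
   - lia. }
 assert (Hts0 : t0 < ts).
 { destruct (Rle_lt_or_eq_dec _ _ (proj1 Hts)) as [Hlt|Heq]; auto.
   subst ts. unfold z in Hzk. specialize (H0 k). specialize (hpos t0 k).
   assert (0 < eps * h t0 k) by nra. lra. }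
 assert (Hwneg : w ts k < 0).
 { unfold z in Hzk. specialize (hpos ts k). assert (0 < eps * h ts k) by nra. lra. }
 specialize (Hineq k ts (conj Hts0 (proj2 Hts)) Hwneg).
 assert (Hdz : derivable_pt_lim (fun s => z s k) ts (w' ts k + eps * (beta * h ts k))).
 { unfold z. apply (derivable_pt_lim_plus (fun s => w s k) (fun s => eps * h s k)).
   apply Hder; auto.
   apply (derivable_pt_lim_scal (fun s => h s k)).
   eapply derivable_pt_lim_ext.
   2:{ apply deriv_eq with (beta * exp (beta * ts + 0) * (exp (IZR k) + exp (- IZR k)) + exp (beta * ts + 0) * 0).
       apply (derivable_pt_lim_mult (fun r => exp (beta * r + 0)) (fun _ => exp (IZR k) + exp (- IZR k))).
       apply deriv_exp_aff. apply derivable_pt_lim_const. unfold h. rewrite Rplus_0_r. ring. }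
   intros r; unfold mult_fct, h; rewrite Rplus_0_r; reflexivity. }
 assert (Hle0 : w' ts k + eps * (beta * h ts k) <= 0).
 { apply (deriv_left_min (fun s => z s k) ts _ t0 Hts0 Hdz).
   intros s Hs. apply Hglob. lra. }
 assert (HDz : 0 <= Dop dd ts (z ts) k).
 { unfold Dop. pose proof (Hglob ts (k+1)%Z Hts). pose proof (Hglob ts (k-1)%Z Hts).
   destruct (Hdd ts (k+1)%Z); destruct (Hdd ts (k-1)%Z).
   apply Rplus_le_le_0_compat; apply Rmult_le_pos; lra. }
 assert (HDlin : Dop dd ts (z ts) k = Dop dd ts (w ts) k + eps * Dop dd ts (h ts) k).
 { unfold Dop, z. ring. }
 assert (HDh : Dop dd ts (h ts) k <= 4 * Dmax * h ts k).
 { unfold Dop, h. rewrite plus_IZR, minus_IZR.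
   destruct (cosh_shift (IZR k)) as [C1 C2].
   set (X := exp (IZR k) + exp (- IZR k)) in *.
   pose proof (exp_pos (beta * ts)). set (Y := exp (beta*ts)) in *.
   assert (0 < X) by (unfold X; pose proof (exp_pos (IZR k)); pose proof (exp_pos (- IZR k)); lra).
   destruct (Hdd ts (k+1)%Z); destruct (Hdd ts (k-1)%Z).
   set (a1 := dd ts (k+1)%Z) in *. set (a2 := dd ts (k-1)%Z) in *.
   set (X1 := exp (IZR k + 1) + exp (- (IZR k + 1))) in *.
   set (X2 := exp (IZR k - 1) + exp (- (IZR k - 1))) in *.
   assert (a1 * (Y * X1 - Y * X) <= Dmax * (2 * Y * X)).
   { apply Rle_trans with (a1 * (2 * Y * X)). apply Rmult_le_compat_l; nra.
     apply Rmult_le_compat_r; nra. }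
   assert (a2 * (Y * X2 - Y * X) <= Dmax * (2 * Y * X)).
   { apply Rle_trans with (a2 * (2 * Y * X)). apply Rmult_le_compat_l; nra.
     apply Rmult_le_compat_r; nra. }
   lra. }
 specialize (hpos ts k).
 assert (eps * Dop dd ts (h ts) k <= eps * (4 * Dmax * h ts k)) by (apply Rmult_le_compat_l; lra).
 assert (0 < eps * h ts k) by nra.
 unfold beta in Hle0. lra.
Qed.

Lemma cmpA (dd : R -> Z -> R) (Dmax A t0 T1 C : R) (w w' : R -> Z -> R) :
  (forall t j, 0 <= dd t j <= Dmax) -> t0 < T1 -> 0 <= C -> 0 <= A ->
  (forall j, 0 <= w t0 j) ->
  (forall t j, t0 <= t <= T1 -> - C <= w t j) ->
  (forall j, continuity_pt (fun s => w (Rmax t0 s) j) t0) ->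
  (forall j t, t0 < t -> derivable_pt_lim (fun s => w s j) t (w' t j)) ->
  (forall j t, t0 < t <= T1 -> w t j < 0 -> Dop dd t (w t) j + A * w t j <= w' t j) ->
  forall t j, t0 <= t <= T1 -> 0 <= w t j.
Proof.
 intros Hdd HT HC HA H0 Hlb Hc0 Hder Hineq t j Ht.
 set (w2 := fun s k => exp (-A * s + 0) * w s k).
 set (w2' := fun s k => -A * exp (-A * s + 0) * w s k + exp (-A * s + 0) * w' s k).
 assert (Hw2 : 0 <= w2 t j).
 { apply (core_cmp dd Dmax t0 T1 (C * exp (-A * t0 + 0)) w2 w2'); auto.
   - pose proof (exp_pos (-A*t0+0)); nra.
   - intros k; unfold w2. pose proof (exp_pos (-A*t0+0)); specialize (H0 k); nra.
   - intros s k Hs. unfold w2. specialize (Hlb s k Hs).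
     assert (exp (-A*s+0) <= exp (-A*t0+0)) by (apply exp_le'; nra).
     pose proof (exp_pos (-A*s+0)). nra.
   - intros k. unfold w2.
     apply (continuity_pt_mult (fun s => exp (-A * Rmax t0 s + 0)) (fun s => w (Rmax t0 s) k)); auto.
     apply (continuity_pt_comp (fun s => Rmax t0 s) (fun r => exp (-A * r + 0))).
     apply Rmax_cont. apply derivable_continuous_pt.
     exists (-A * exp (-A * Rmax t0 t0 + 0)). apply deriv_exp_aff.
   - intros k s Hs. unfold w2, w2'.
     apply deriv_eq with (-A * exp (-A * s + 0) * w s k + exp (-A * s + 0) * w' s k).
     apply (derivable_pt_lim_mult (fun r => exp (-A * r + 0)) (fun r => w r k)).
     apply deriv_exp_aff. apply Hder; auto. ring.
   - intros k s Hs Hneg. unfold w2, w2' in *.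
     pose proof (exp_pos (-A*s+0)).
     assert (w s k < 0) by nra.
     specialize (Hineq k s Hs H1).
     assert (Dop dd s (fun k0 => exp (-A * s + 0) * w s k0) k = exp (-A*s+0) * Dop dd s (w s) k)
       by (unfold Dop; ring).
     rewrite H2. nra. }
 unfold w2 in Hw2. pose proof (exp_pos (-A*t+0)). nra.
Qed.

Section F.
Variable f : R -> Z -> R -> R.
Variable fu : R -> Z -> R -> R.
Hypothesis Hlip : forall M, exists L, forall t j u v, Rabs u <= M -> Rabs v <= M ->
        Rabs (f t j u - f t j v) <= L * Rabs (u - v).
Hypothesis Hder : forall t j u, 0 < u -> derivable_pt_lim (f t j) u (fu t j u).
Hypothesis Hneg : forall t j u, 0 <= u -> fu t j u < 0.
Hypothesis Hflat : forall t j u, u <= 0 -> f t j u = f t j 0.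

Lemma f_strict t j a b : 0 < a -> a < b -> f t j b < f t j a.
Proof.
 intros Ha Hab. destruct (MVT_cor2 (f t j) (fu t j) a b Hab) as [c [Hc1 Hc2]].
 intros c0 Hc0; apply Hder; lra.
 assert (fu t j c < 0) by (apply Hneg; lra). nra.
Qed.

Lemma f_le0 t j x : 0 < x -> f t j x <= f t j 0.
Proof.
 intros Hx. destruct (Rle_lt_dec (f t j x) (f t j 0)) as [ok|Hc]; auto. exfalso.
 destruct (Hlip x) as [L HL].
 set (a := Rmin (x/2) ((f t j x - f t j 0) / (2 * (Rabs L + 1)))).
 assert (HLp : 0 < Rabs L + 1) by (pose proof (Rabs_pos L); lra).
 assert (Ha0 : 0 < a). { apply Rmin_pos. lra. apply Rdiv_lt_0_compat; lra. }
 assert (Ha1 : a <= x/2) by apply Rmin_l.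
 assert (Ha2 : a <= (f t j x - f t j 0) / (2 * (Rabs L + 1))) by apply Rmin_r.
 assert (H1 : f t j x < f t j a) by (apply f_strict; lra).
 specialize (HL t j a 0).
 assert (Rabs a <= x) by (rewrite Rabs_right; lra).
 assert (Rabs 0 <= x) by (rewrite Rabs_R0; lra).
 specialize (HL H H0). rewrite Rminus_0_r, (Rabs_right a) in HL by lra.
 assert (L * a <= (Rabs L + 1) * a) by (pose proof (Rle_abs L); nra).
 assert ((Rabs L + 1) * a <= (f t j x - f t j 0)/2).
 { apply Rle_trans with ((Rabs L + 1) * ((f t j x - f t j 0) / (2 * (Rabs L + 1)))).
   apply Rmult_le_compat_l; lra. right; field; lra. }
 assert (f t j a - f t j 0 <= Rabs (f t j a - f t j 0)) by apply Rle_abs.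
 lra.
Qed.

Lemma f_mono t j x y : x <= y -> f t j y <= f t j x.
Proof.
 intros Hxy. destruct (Rle_lt_dec y 0).
 - rewrite (Hflat t j y), (Hflat t j x) by lra; lra.
 - destruct (Rle_lt_dec x 0).
   + rewrite (Hflat t j x) by lra. apply f_le0; auto.
   + destruct (Rle_lt_or_eq_dec _ _ Hxy). left; apply f_strict; lra. subst; lra.
Qed.

Lemma f_upper (M0 : R) : 0 < M0 -> (forall t j u, M0 <= u -> f t j u < 0) ->
  exists A, 0 <= A /\ forall t j x, f t j x <= A.
Proof.
 intros HM0 Hn. destruct (Hlip M0) as [L HL]. exists (Rabs L * M0). split.
 pose proof (Rabs_pos L); nra.
 intros t j x. apply Rle_trans with (f t j 0).
 destruct (Rle_lt_dec x 0). rewrite Hflat; lra. apply f_le0; auto.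
 specialize (HL t j 0 M0). rewrite Rabs_R0, (Rabs_right M0) in HL by lra.
 specialize (HL ltac:(lra) ltac:(lra)). rewrite Rminus_0_l, Rabs_Ropp, (Rabs_right M0) in HL by lra.
 specialize (Hn t j M0 (Rle_refl _)).
 pose proof (Rle_abs (f t j 0 - f t j M0)). pose proof (Rle_abs L). nra.
Qed.
End F.

Lemma rc_to_cont (g : R -> R) t0 : (forall eps, 0 < eps -> exists delta, 0 < delta /\
   forall s, t0 <= s < t0 + delta -> Rabs (g s - g t0) < eps) ->
   continuity_pt (fun s => g (Rmax t0 s)) t0.
Proof.
 unfold continuity_pt, continue_in, limit1_in, limit_in. intros H eps Heps.
 destruct (H eps Heps) as [d [Hd Hs]]. exists d; split; auto. intros y [_ Hy].
 simpl in *. unfold Rdist in *. rewrite (Rmax_left t0 t0) by lra.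
 unfold Rmax at 1. destruct (Rle_dec t0 y).
 - apply Hs. split; auto. revert Hy; unfold Rabs; destruct Rcase_abs; lra.
 - rewrite Rminus_diag, Rabs_R0; lra.
Qed.

Section Psi.
Variables (T : R) (J : Z) (dd : R -> Z -> R) (f : R -> Z -> R -> R)
  (lam : R -> R) (psi : R -> R -> Z -> R).
Hypothesis Hpr : principal_data T J dd f lam psi.

Lemma phi_deriv mu c t j :
  derivable_pt_lim (fun s => phi_of lam psi mu c s j) t
   (Dop dd t (fun k => phi_of lam psi mu c t k) j + f t j 0 * phi_of lam psi mu c t j
    + (mu*c - lam mu) * phi_of lam psi mu c t j).
Proof.
 destruct (Hpr mu) as [_ [_ [_ [_ Hd]]]].
 apply derivable_pt_lim_ext with (f := fun s => exp ((mu*c - lam mu) * s + (- mu * IZR j)) * (exp (lam mu * s) * psi mu s j)).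
 { intros s. unfold phi_of. rewrite <- Rmult_assoc, <- exp_plus. f_equal. f_equal. ring. }
 eapply deriv_eq.
 apply (derivable_pt_lim_mult (fun s => exp ((mu*c - lam mu) * s + (- mu * IZR j))) (fun s => exp (lam mu * s) * psi mu s j)).
 apply deriv_exp_aff. apply Hd.
 unfold rhsLin, Dop, phi_of. rewrite plus_IZR, minus_IZR.
 set (P := exp (- mu * (IZR j - c * t))).
 assert (E1 : exp ((mu * c - lam mu) * t + - mu * IZR j) = P * / exp (lam mu * t)).
 { unfold P. rewrite <- exp_Ropp, <- exp_plus. f_equal; ring. }
 assert (E2 : exp (- mu * (IZR j + 1 - c * t)) = P * exp (- mu)).
 { unfold P. rewrite <- exp_plus. f_equal; ring. }
 assert (E3 : exp (- mu * (IZR j - 1 - c * t)) = P * exp mu).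
 { unfold P. rewrite <- exp_plus. f_equal; ring. }
 rewrite E1, E2, E3. pose proof (exp_pos (lam mu * t)). field. lra.
Qed.

Lemma psi_cont mu j s : continuity_pt (fun r => psi mu r j) s.
Proof.
 destruct (Hpr mu) as [_ [_ [_ [_ Hd]]]].
 apply derivable_continuous_pt.
 exists ((- lam mu) * exp (- lam mu * s + 0) * (exp (lam mu * s) * psi mu s j)
    + exp (- lam mu * s + 0) * rhsLin dd f mu s (fun k => exp (lam mu * s) * psi mu s k) j).
 apply derivable_pt_lim_ext with (f := fun r => exp (- lam mu * r + 0) * (exp (lam mu * r) * psi mu r j)).
 { intros r. rewrite <- Rmult_assoc, <- exp_plus. replace (- lam mu * r + 0 + lam mu * r) with 0 by ring.
   rewrite exp_0; ring. }
 apply (derivable_pt_lim_mult (fun r => exp (- lam mu * r + 0)) (fun r => exp (lam mu * r) * psi mu r j)).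
 apply deriv_exp_aff. apply Hd.
Qed.

Lemma per_t mu j : forall (n : nat) s, psi mu (s + INR n * T) j = psi mu s j.
Proof.
 destruct (Hpr mu) as [_ [Hpt _]].
 induction n; intros s. simpl; rewrite Rmult_0_l, Rplus_0_r; auto.
 rewrite S_INR. replace (s + (INR n + 1) * T) with ((s + INR n * T) + T) by ring.
 rewrite Hpt. apply IHn.
Qed.

Lemma per_j mu t : forall (n : nat) k, psi mu t (k + Z.of_nat n * J)%Z = psi mu t k.
Proof.
 destruct (Hpr mu) as [_ [_ [Hpj _]]].
 induction n; intros k. simpl. rewrite Z.add_0_r; auto.
 rewrite Nat2Z.inj_succ. replace (k + Z.succ (Z.of_nat n) * J)%Z with ((k + Z.of_nat n * J) + J)%Z by ring.
 rewrite Hpj. apply IHn.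
Qed.

Lemma red_t (HT : 0 < T) mu t : exists t', 0 <= t' <= T /\ forall j, psi mu t j = psi mu t' j.
Proof.
 destruct (archimed (t / T)) as [H1 H2].
 set (n := (up (t / T) - 1)%Z).
 assert (Hn : IZR n = IZR (up (t/T)) - 1) by (unfold n; rewrite minus_IZR; auto).
 assert (Htt : t = (t / T) * T) by (field; lra).
 exists (t - IZR n * T). split.
 - split; rewrite Hn; rewrite Htt at 1; nra.
 - intros j. destruct (Z_le_gt_dec 0 n) as [Hp|Hng].
   + rewrite <- (per_t mu j (Z.to_nat n) (t - IZR n * T)).
     rewrite INR_IZR_INZ, Z2Nat.id by auto. f_equal; ring.
   + rewrite <- (per_t mu j (Z.to_nat (- n)) t).
     rewrite INR_IZR_INZ, Z2Nat.id by lia. rewrite opp_IZR. f_equal; ring.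
Qed.

Lemma red_j (HJ : (0 < J)%Z) mu j : exists j', (0 <= j' < J)%Z /\ forall t, psi mu t j = psi mu t j'.
Proof.
 exists (j mod J)%Z. split. apply Z.mod_pos_bound; auto.
 intros t. pose proof (Z.div_mod j J ltac:(lia)) as Hdm.
 set (q := (j / J)%Z) in *. set (r := (j mod J)%Z) in *.
 destruct (Z_le_gt_dec 0 q).
 - rewrite <- (per_j mu t (Z.to_nat q) r). rewrite Z2Nat.id by auto. f_equal. lia.
 - rewrite <- (per_j mu t (Z.to_nat (- q)) j). rewrite Z2Nat.id by lia. f_equal. lia.
Qed.

Lemma psi_bounds (HT : 0 < T) (HJ : (0 < J)%Z) mu :
  exists m M, 0 < m /\ forall t j, m <= psi mu t j <= M.
Proof.
 assert (HJ' : (0 + Z.of_nat (Z.to_nat (J - 1)) = J - 1)%Z) by (rewrite Z2Nat.id; lia).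
 destruct (finite_evt (fun s k => psi mu s k) 0 T ltac:(lra) (fun k c _ => psi_cont mu k c)
   (Z.to_nat (J-1)) 0%Z) as [k1 [ts1 [Hk1 [Hts1 Hm1]]]].
 destruct (finite_evt (fun s k => - psi mu s k) 0 T ltac:(lra)
   (fun k c _ => continuity_pt_opp _ _ (psi_cont mu k c))
   (Z.to_nat (J-1)) 0%Z) as [k2 [ts2 [Hk2 [Hts2 Hm2]]]].
 rewrite HJ' in *.
 exists (psi mu ts1 k1), (psi mu ts2 k2). split.
 - destruct (Hpr mu) as [Hp _]. apply Hp.
 - intros t j. destruct (red_t HT mu t) as [t' [Ht' Et]]. destruct (red_j HJ mu j) as [j' [Hj' Ej]].
   rewrite Et, Ej. split.
   + apply (Hm1 j' t'); auto; lia.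
   + assert (- psi mu ts2 k2 <= - psi mu t' j') by (apply (Hm2 j' t'); auto; lia). lra.
Qed.
End Psi.

Lemma Vbound (d d1 mu mu' c s kk m2 M1 Lr : R) (k : Z) (a b : R)
  (Hd : 0 < d <= 2) (Hmu : 0 < mu) (Hmm : mu < mu') (H2 : mu' < 2*mu)
  (Ha : 0 < a <= M1) (Hb : m2 <= b) (Hm2 : 0 < m2) (Hkk : 0 < kk)
  (Hd1a : M1 / m2 * d <= d1) (Hd1b : 2 * Rabs Lr * M1^2 / (kk * m2) * d <= d1) :
  0 < d * (exp (-mu * (IZR k - c * s)) * a) - d1 * (exp (-mu' * (IZR k - c * s)) * b) ->
  d * (exp (-mu * (IZR k - c * s)) * a) - d1 * (exp (-mu' * (IZR k - c * s)) * b) <= 2 * M1 /\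
  Rabs Lr * ((d * (exp (-mu * (IZR k - c * s)) * a) - d1 * (exp (-mu' * (IZR k - c * s)) * b))
            * (d * (exp (-mu * (IZR k - c * s)) * a) - d1 * (exp (-mu' * (IZR k - c * s)) * b)))
   <= d1 * kk * (exp (-mu' * (IZR k - c * s)) * b).
Proof.
 set (x := IZR k - c * s). set (E := exp (-mu * x)). set (E1 := exp (-mu' * x)).
 set (q := exp ((mu' - mu) * x)).
 intros HV. set (V := d * (E * a) - d1 * (E1 * b)) in *.
 assert (HE : E = E1 * q) by (unfold E, E1, q; rewrite <- exp_plus; f_equal; ring).
 assert (HE1 : 0 < E1) by apply exp_pos. assert (Hq : 0 < q) by apply exp_pos.
 assert (HEp : 0 < E) by apply exp_pos.
 assert (HM1 : 0 < M1) by lra.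
 assert (Hd1 : 0 <= d1).
 { eapply Rle_trans; [|exact Hd1a]. apply Rmult_le_pos; [|lra]. apply Rmult_le_pos; [lra|].
   left; apply Rinv_0_lt_compat; lra. }
 assert (Hs1 : d1 * b < d * q * a).
 { assert (0 < E1 * (d * q * a - d1 * b)) by (unfold V in HV; rewrite HE in HV; nra). nra. }
 assert (Hs2 : M1 * d <= d1 * b).
 { apply Rle_trans with (d1 * m2). replace (M1 * d) with ((M1 / m2 * d) * m2) by (field; lra).
   apply Rmult_le_compat_r; lra. apply Rmult_le_compat_l; lra. }
 assert (Hq1 : 1 < q).
 { assert (M1 < q * a) by nra. destruct (Rle_lt_dec q 1); auto. nra. }
 assert (Hx : 0 < x).
 { destruct (Rle_lt_dec x 0) as [Hx|Hx]; auto. exfalso.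
   assert (q <= exp 0) by (apply exp_le'; nra). rewrite exp_0 in H. lra. }
 assert (HE1' : E <= 1) by (rewrite <- exp_0; apply exp_le'; nra).
 assert (HVle : V <= d * E * a).
 { unfold V. assert (0 <= d1 * (E1 * b)) by (apply Rmult_le_pos; nra). lra. }
 assert (HdEa : d * E * a <= 2 * M1).
 { apply Rle_trans with (d * 1 * M1). apply Rmult_le_compat; nra. nra. }
 split. lra.
 assert (HEE : E * E <= E1).
 { replace (E * E) with (E1 * exp (-(2*mu - mu') * x)).
   assert (exp (-(2*mu - mu') * x) <= 1) by (rewrite <- exp_0; apply exp_le'; nra). nra.
   unfold E, E1. rewrite <- !exp_plus. f_equal; ring. }
 set (La := Rabs Lr). assert (HLa : 0 <= La) by apply Rabs_pos.
 assert (HVV : V * V <= (d * E * a) * (d * E * a)) by nra.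
 assert (Ha2 : (d * E * a) * (d * E * a) <= d * d * M1 * M1 * E1).
 { replace ((d * E * a) * (d * E * a)) with (d * d * (a * a) * (E * E)) by ring.
   assert (a * a <= M1 * M1) by nra.
   assert (0 <= d * d) by nra.
   assert (d * d * (a * a) <= d * d * M1 * M1) by (replace (d*d*M1*M1) with (d*d*(M1*M1)) by ring; apply Rmult_le_compat_l; lra).
   apply Rmult_le_compat; nra. }
 assert (Hdd : d * d * M1 * M1 * E1 <= 2 * d * M1 * M1 * E1) by nra.
 assert (HR : 2 * La * M1 ^ 2 * d * E1 <= d1 * kk * (E1 * b)).
 { assert (2 * La * M1 ^ 2 * d <= d1 * kk * m2).
   { replace (2 * La * M1 ^ 2 * d) with ((2 * La * M1 ^ 2 / (kk * m2) * d) * (kk * m2)) by (field; lra).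
     replace (d1 * kk * m2) with (d1 * (kk * m2)) by ring.
     apply Rmult_le_compat_r; [nra|]. unfold La; exact Hd1b. }
   assert (d1 * kk * m2 <= d1 * kk * b) by (apply Rmult_le_compat_l; nra).
   nra. }
 assert (La * (V * V) <= La * (2 * d * M1 * M1 * E1)) by (apply Rmult_le_compat_l; lra).
 nra.
Qed.

Theorem proposition3p4
  (T : R) (J : Z) (dd : R -> Z -> R) (f : R -> Z -> R -> R)
  (lam : R -> R) (psi : R -> R -> Z -> R)
  (mustar c mu mu' : R)
  (Hset : periodic_setting T J dd f)
  (Hpr : principal_data T J dd f lam psi)
  (Hmustar : 0 < mustar /\ forall m, 0 < m -> lam mustar / mustar <= lam m / m)
  (Hc : lam mustar / mustar < c)
  (Hmu : 0 < mu /\ mu < mu' /\ mu' < Rmin (2 * mu) mustar)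
  (Hcmu : c = lam mu / mu)
  (Hord : lam mu / mu > lam mu' / mu' /\ lam mu' / mu' > lam mustar / mustar)
  (d : R) (t0 : R) (Hd : 0 < d <= 2) :
  exists K : R, forall d1 : R, K <= d1 / d ->
    forall u0 : Z -> R, linf_plus u0 ->
    forall u : R -> Z -> R, is_solution dd f t0 u0 u ->
      ((forall j, u0 j <= d * phi_of lam psi mu c t0 j + d1 * phi_of lam psi mu' c t0 j) ->
         forall t j, t0 <= t -> u t j <= d * phi_of lam psi mu c t j + d1 * phi_of lam psi mu' c t j) /\
      ((forall j, u0 j >= d * phi_of lam psi mu c t0 j - d1 * phi_of lam psi mu' c t0 j) ->
         forall t j, t0 <= t -> u t j >= d * phi_of lam psi mu c t j - d1 * phi_of lam psi mu' c t j).
Proof.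
 destruct Hset as [HT [HJ [[Bd HBd] [[del [Hdel Hddl]] [_ [_ [_ [_ [_ [Hlip
   [[fu [Hfud [_ Hfun]]] [Hflat [[M0 [HM0 HfM0]] _]]]]]]]]]]]]].
 assert (Hdd : forall t j, 0 <= dd t j <= Bd) by (intros; split; [specialize (Hddl t j); lra | apply HBd]).
 destruct (f_upper f fu Hlip Hfud Hfun Hflat M0 HM0 HfM0) as [A [HA HfA]].
 destruct Hmu as [Hmu0 [Hmumu' Hmu'm]].
 assert (H2mu : mu' < 2 * mu) by (eapply Rlt_le_trans; [exact Hmu'm | apply Rmin_l]).
 assert (Hmuc : mu * c - lam mu = 0) by (rewrite Hcmu; field; lra).
 set (kk := mu' * c - lam mu').
 assert (Hkk : 0 < kk).
 { unfold kk. destruct Hord as [Ho _]. rewrite <- Hcmu in Ho.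
   assert (lam mu' = (lam mu' / mu') * mu') by (field; lra).
   assert (0 < mu') by lra. nra. }
 destruct (psi_bounds T J dd f lam psi Hpr HT HJ mu) as [m1 [M1 [Hm1 HM1]]].
 destruct (psi_bounds T J dd f lam psi Hpr HT HJ mu') as [m2 [M2 [Hm2 HM2]]].
 assert (HM1p : 0 < M1) by (destruct (HM1 0 0%Z); lra).
 destruct (Hlip (2 * M1)) as [Lr HLr].
 exists (M1 / m2 + 2 * Rabs Lr * M1 ^ 2 / (kk * m2) + 1).
 intros d1 HK u0 Hu0 u Hsol.
 assert (HK1 : 0 <= M1 / m2) by (apply Rmult_le_pos; [lra | left; apply Rinv_0_lt_compat; lra]).
 assert (HK2 : 0 <= 2 * Rabs Lr * M1 ^ 2 / (kk * m2)).
 { apply Rmult_le_pos. pose proof (Rabs_pos Lr). assert (0 <= M1^2) by nra. nra.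
   left; apply Rinv_0_lt_compat; nra. }
 assert (Hd1d : d1 = (d1 / d) * d) by (field; lra).
 assert (Hd1a : M1 / m2 * d <= d1) by (rewrite Hd1d; apply Rmult_le_compat_r; lra).
 assert (Hd1b : 2 * Rabs Lr * M1 ^ 2 / (kk * m2) * d <= d1) by (rewrite Hd1d; apply Rmult_le_compat_r; lra).
 assert (Hd1 : 0 <= d1) by (assert (0 <= M1 / m2 * d) by nra; lra).
 destruct Hsol as [Hinit [Hbd [Hrc Hud]]].
 set (phi := fun s k => phi_of lam psi mu c s k).
 set (phi1 := fun s k => phi_of lam psi mu' c s k).
 assert (Hphi : forall s k, 0 < phi s k).
 { intros; unfold phi, phi_of. destruct (Hpr mu) as [Hp _]. pose proof (Hp s k). pose proof (exp_pos (- mu * (IZR k - c * s))). nra. }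
 assert (Hphi1 : forall s k, 0 < phi1 s k).
 { intros; unfold phi1, phi_of. destruct (Hpr mu') as [Hp _]. pose proof (Hp s k). pose proof (exp_pos (- mu' * (IZR k - c * s))). nra. }
 assert (Hdphi : forall s k, derivable_pt_lim (fun r => phi r k) s
    (Dop dd s (phi s) k + f s k 0 * phi s k)).
 { intros s k. eapply deriv_eq. apply (phi_deriv T J dd f lam psi Hpr mu c s k).
   rewrite Hmuc. unfold phi. ring. }
 assert (Hdphi1 : forall s k, derivable_pt_lim (fun r => phi1 r k) s
    (Dop dd s (phi1 s) k + f s k 0 * phi1 s k + kk * phi1 s k)).
 { intros s k. apply (phi_deriv T J dd f lam psi Hpr mu' c s k). }
 assert (Hcphi : forall k, continuity_pt (fun s => phi (Rmax t0 s) k) t0).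
 { intros k. apply (continuity_pt_comp (fun s => Rmax t0 s) (fun r => phi r k)). apply Rmax_cont.
   apply derivable_continuous_pt. eexists. apply Hdphi. }
 assert (Hcphi1 : forall k, continuity_pt (fun s => phi1 (Rmax t0 s) k) t0).
 { intros k. apply (continuity_pt_comp (fun s => Rmax t0 s) (fun r => phi1 r k)). apply Rmax_cont.
   apply derivable_continuous_pt. eexists. apply Hdphi1. }
 assert (Hcu : forall k, continuity_pt (fun s => u (Rmax t0 s) k) t0).
 { intros k. apply (rc_to_cont (fun s => u s k)). rewrite Hinit. apply Hrc. }
 assert (Hrhs : forall s k, rhsE dd f s (u s) k = Dop dd s (u s) k + u s k * f s k (u s k)).
 { intros; unfold rhsE, Dop; ring. }
 split.
 -
   intros Hup t j Ht. fold phi phi1 in Hup |- *.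
   destruct (Rle_lt_or_eq_dec _ _ Ht) as [Hlt|Heq]; [| subst t; rewrite Hinit; apply Hup].
   destruct (Hbd t Ht) as [B HB].
   set (w := fun s k => d * phi s k + d1 * phi1 s k - u s k).
   set (w' := fun s k => d * (Dop dd s (phi s) k + f s k 0 * phi s k)
      + d1 * (Dop dd s (phi1 s) k + f s k 0 * phi1 s k + kk * phi1 s k) - rhsE dd f s (u s) k).
   assert (Hw : 0 <= w t j).
   { apply (cmpA dd Bd A t0 t (Rabs B) w w'); auto.
     - apply Rabs_pos.
     - intros k; unfold w. rewrite Hinit. specialize (Hup k). lra.
     - intros s k Hs. unfold w. specialize (HB s k Hs). pose proof (Hphi s k). pose proof (Hphi1 s k).
       assert (u s k <= Rabs B) by (pose proof (Rle_abs (u s k)); pose proof (Rle_abs B); lra).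
       assert (0 <= d * phi s k) by nra. assert (0 <= d1 * phi1 s k) by nra. lra.
     - intros k. unfold w.
       exact (continuity_pt_minus _ _ _ (continuity_pt_plus _ _ _ (continuity_pt_scal _ d _ (Hcphi k))
          (continuity_pt_scal _ d1 _ (Hcphi1 k))) (Hcu k)).
     - intros k s Hs. unfold w, w'.
       exact (derivable_pt_lim_minus _ _ _ _ _ (derivable_pt_lim_plus _ _ _ _ _
         (derivable_pt_lim_scal _ d _ _ (Hdphi s k)) (derivable_pt_lim_scal _ d1 _ _ (Hdphi1 s k)))
         (Hud k s Hs)).
     - intros k s Hs Hneg. unfold w, w' in *. rewrite Hrhs.
       assert (HD : Dop dd s (fun k0 => d * phi s k0 + d1 * phi1 s k0 - u s k0) k
          = d * Dop dd s (phi s) k + d1 * Dop dd s (phi1 s) k - Dop dd s (u s) k) by (unfold Dop; ring).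
       rewrite HD.
       pose proof (Hphi s k). pose proof (Hphi1 s k).
       set (U := d * phi s k + d1 * phi1 s k) in *.
       assert (HU : 0 < U) by (unfold U; nra).
       set (uu := u s k) in *.
       assert (Hfu : f s k uu <= f s k 0) by (apply (f_le0 f fu Hlip Hfud Hfun); lra).
       assert (uu * f s k uu <= uu * f s k 0) by (apply Rmult_le_compat_l; lra).
       pose proof (HfA s k 0).
       assert (f s k 0 * (U - uu) >= A * (U - uu)) by nra.
       assert (0 <= d1 * (kk * phi1 s k)) by (apply Rmult_le_pos; nra).
       unfold U in *. lra.
     - lra. }
   unfold w in Hw. lra.
 -
   intros Hlo t j Ht. fold phi phi1 in Hlo |- *.
   destruct (Rle_lt_or_eq_dec _ _ Ht) as [Hlt|Heq]; [| subst t; rewrite Hinit; apply Hlo].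
   destruct (Hbd t Ht) as [B HB].
   assert (HVb : forall s k, 0 < d * phi s k - d1 * phi1 s k ->
      d * phi s k - d1 * phi1 s k <= 2 * M1 /\
      Rabs Lr * ((d * phi s k - d1 * phi1 s k) * (d * phi s k - d1 * phi1 s k)) <= d1 * kk * phi1 s k).
   { intros s k. unfold phi, phi1, phi_of.
     destruct (HM1 s k). destruct (HM2 s k). destruct (Hpr mu) as [Hp _]. pose proof (Hp s k).
     apply (Vbound d d1 mu mu' c s kk m2 M1 Lr k); auto; lra. }
   set (w := fun s k => u s k - (d * phi s k - d1 * phi1 s k)).
   set (w' := fun s k => rhsE dd f s (u s) k - (d * (Dop dd s (phi s) k + f s k 0 * phi s k)
      - d1 * (Dop dd s (phi1 s) k + f s k 0 * phi1 s k + kk * phi1 s k))).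
   assert (Hw : 0 <= w t j).
   { apply (cmpA dd Bd A t0 t (Rabs B + 2 * M1) w w'); auto.
     - pose proof (Rabs_pos B); lra.
     - intros k; unfold w. rewrite Hinit. specialize (Hlo k). lra.
     - intros s k Hs. unfold w. specialize (HB s k Hs).
       assert (- Rabs B <= u s k) by (pose proof (Rle_abs (- u s k)); rewrite Rabs_Ropp in *; pose proof (Rle_abs B); lra).
       destruct (Rle_lt_dec (d * phi s k - d1 * phi1 s k) 0) as [Hle|Hgt]. lra.
       destruct (HVb s k Hgt). lra.
     - intros k. unfold w.
       exact (continuity_pt_minus _ _ _ (Hcu k) (continuity_pt_minus _ _ _ (continuity_pt_scal _ d _ (Hcphi k))
          (continuity_pt_scal _ d1 _ (Hcphi1 k)))).
     - intros k s Hs. unfold w, w'.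
       exact (derivable_pt_lim_minus _ _ _ _ _ (Hud k s Hs) (derivable_pt_lim_minus _ _ _ _ _
         (derivable_pt_lim_scal _ d _ _ (Hdphi s k)) (derivable_pt_lim_scal _ d1 _ _ (Hdphi1 s k)))).
     - intros k s Hs Hneg. unfold w, w' in *. rewrite Hrhs.
       assert (HD : Dop dd s (fun k0 => u s k0 - (d * phi s k0 - d1 * phi1 s k0)) k
          = Dop dd s (u s) k - (d * Dop dd s (phi s) k - d1 * Dop dd s (phi1 s) k)) by (unfold Dop; ring).
       rewrite HD.
       pose proof (Hphi s k). pose proof (Hphi1 s k).
       set (V := d * phi s k - d1 * phi1 s k) in *.
       set (uu := u s k) in *.
       assert (0 <= d1 * (kk * phi1 s k)) by (apply Rmult_le_pos; nra).
       pose proof (HfA s k uu).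
       assert (Hg : uu * f s k uu - f s k 0 * V + d1 * kk * phi1 s k >= A * (uu - V)).
       { destruct (Rle_lt_dec V 0) as [HV|HV].
         - rewrite (Hflat s k uu) by lra. pose proof (HfA s k 0). nra.
         - destruct (HVb s k HV) as [HV1 HV2]. fold V in HV1, HV2.
           assert (Hm : f s k V <= f s k uu) by (apply (f_mono f fu Hlip Hfud Hfun Hflat); lra).
           specialize (HLr s k V 0).
           rewrite Rabs_R0, Rminus_0_r, (Rabs_right V) in HLr by lra.
           specialize (HLr ltac:(lra) ltac:(lra)).
           assert (f s k 0 - f s k V <= Rabs Lr * V).
           { pose proof (Rle_abs (f s k 0 - f s k V)) as Ha1. pose proof (Rle_abs Lr) as Ha2.
             assert (Lr * V <= Rabs Lr * V) by (apply Rmult_le_compat_r; lra).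
             rewrite Rabs_minus_sym in Ha1. lra. }
           assert (V * (f s k 0 - f s k V) <= V * (Rabs Lr * V)) by (apply Rmult_le_compat_l; lra).
           assert ((uu - V) * f s k uu >= (uu - V) * A) by nra.
           assert (V * (f s k uu - f s k V) >= 0) by nra.
           nra. }
       unfold V in *. lra.
     - lra. }
   unfold w in Hw. lra.
Qed.
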